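(* There are infinitely many (pairwise non-isomorphic) finite simple graphs $G$ such that $G$ is 2-connected, cubic, and bipartite, $v(G) \equiv 0 \pmod 6$, and $G$ has no $\Lambda$-factor.
   Context: Graphs are finite, undirected, without loops or multiple edges; $v(G)=|V(G)|$. $\Lambda$ denotes the path on 3 vertices. A $\Lambda$-factor of $G$ is a spanning subgraph of $G$ each of whose connected components is a 3-vertex path. *)

(* Defs.v *)
From mathcomp Require Import all_boot.
Set Implicit Arguments. Unset Strict Implicit. Unset Printing Implicit Defensive.

Definition simple_graph (T : finType) (e : rel T) : Prop :=
  symmetric e /\ irreflexive e.

Definition nbhd (T : finType) (e : rel T) (x : T) : {set T} := [set y | e x y].
Definition cubic (T : finType) (e : rel T) : Prop :=
  forall x : T, #|nbhd e x| = 3.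

Definition bipartite (T : finType) (e : rel T) : Prop :=
  exists A : {set T}, forall x y, e x y -> (x \in A) != (y \in A).

Definition connected (T : finType) (e : rel T) : Prop :=
  forall x y : T, connect e x y.

Definition connected_minus (T : finType) (e : rel T) (v : T) : Prop :=
  forall x y : T, x != v -> y != v ->
    connect [rel a b | e a b && (a != v) && (b != v)] x y.

Definition two_connected (T : finType) (e : rel T) : Prop :=
  2 < #|T| /\ connected e /\ forall v : T, connected_minus e v.

(* A Lambda-factor: a spanning subgraph F of G (same vertex set, F ⊆ E(G),
   F symmetric) every connected component of which is a path on 3 vertices. *)
Definition component (T : finType) (F : rel T) (x : T) : {set T} :=
  [set y | connect F x y].

Definition is_P3 (T : finType) (F : rel T) (C : {set T}) : Prop :=
  exists a b c : T, [/\ uniq [:: a; b; c], C = [set a; b; c],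
                        F a b, F b c & ~~ F a c].

Definition Lambda_factor (T : finType) (e : rel T) (F : rel T) : Prop :=
  [/\ symmetric F, subrel F e & forall x : T, is_P3 F (component F x)].

Definition has_Lambda_factor (T : finType) (e : rel T) : Prop :=
  exists F : rel T, Lambda_factor e F.

Definition isomorphic (T1 T2 : finType) (e1 : rel T1) (e2 : rel T2) : Prop :=
  exists f : T1 -> T2, bijective f /\ forall x y, e2 (f x) (f y) = e1 x y.

(* Main.v *)
Require Import Defs.
From mathcomp Require Import all_boot zify.
From Stdlib Require PeanoNat.


Definition NDn (a : nat) : seq nat :=
  match a with
  | 0 => [:: 4; 6]
  | 1 => [:: 4; 5; 7]
  | 2 => [:: 5; 6; 7]
  | 3 => [:: 5; 6; 7]
  | 4 => [:: 0; 1; 8]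
  | 5 => [:: 1; 2; 3]
  | 6 => [:: 0; 2; 3]
  | 7 => [:: 1; 2; 3]
  | 8 => [:: 4; 14; 22]
  | 9 => [:: 10; 18; 26]
  | 10 => [:: 9; 14; 16]
  | 11 => [:: 14; 15; 17]
  | 12 => [:: 15; 16; 17]
  | 13 => [:: 15; 16; 17]
  | 14 => [:: 8; 10; 11]
  | 15 => [:: 11; 12; 13]
  | 16 => [:: 10; 12; 13]
  | 17 => [:: 11; 12; 13]
  | 18 => [:: 9; 22; 24]
  | 19 => [:: 22; 23; 25]
  | 20 => [:: 23; 24; 25]
  | 21 => [:: 23; 24; 25]
  | 22 => [:: 8; 18; 19]
  | 23 => [:: 19; 20; 21]
  | 24 => [:: 18; 20; 21]
  | 25 => [:: 19; 20; 21]
  | 26 => [:: 9; 30; 32]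
  | 27 => [:: 30; 31; 33]
  | 28 => [:: 31; 32; 33]
  | 29 => [:: 31; 32; 33]
  | 30 => [:: 26; 27; 34]
  | 31 => [:: 27; 28; 29]
  | 32 => [:: 26; 28; 29]
  | 33 => [:: 27; 28; 29]
  | 34 => [:: 30; 40; 48]
  | 35 => [:: 36; 44; 52]
  | 36 => [:: 35; 40; 42]
  | 37 => [:: 40; 41; 43]
  | 38 => [:: 41; 42; 43]
  | 39 => [:: 41; 42; 43]
  | 40 => [:: 34; 36; 37]
  | 41 => [:: 37; 38; 39]
  | 42 => [:: 36; 38; 39]
  | 43 => [:: 37; 38; 39]
  | 44 => [:: 35; 48; 50]
  | 45 => [:: 48; 49; 51]
  | 46 => [:: 49; 50; 51]
  | 47 => [:: 49; 50; 51]
  | 48 => [:: 34; 44; 45]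
  | 49 => [:: 45; 46; 47]
  | 50 => [:: 44; 46; 47]
  | 51 => [:: 45; 46; 47]
  | 52 => [:: 35; 56; 58]
  | 53 => [:: 56; 57; 59]
  | 54 => [:: 57; 58; 59]
  | 55 => [:: 57; 58; 59]
  | 56 => [:: 52; 53]
  | 57 => [:: 53; 54; 55]
  | 58 => [:: 52; 54; 55]
  | 59 => [:: 53; 54; 55]
  | _ => [::] end.
Definition Alist : seq nat := [:: 0; 1; 2; 3; 8; 10; 11; 12; 13; 18; 19; 20; 21; 26; 27; 28; 29; 34; 36; 37; 38; 39; 44; 45; 46; 47; 52; 53; 54; 55].
Definition I60 := iota 0 60.
Definition Rn (a b : nat) : bool := b \in NDn a.
Definition Rm (z a b : nat) : bool := [&& b \in NDn a, a != z & b != z].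
Definition step (R : nat -> nat -> bool) (S : seq nat) : seq nat :=
  undup (S ++ flatten [seq [seq b <- NDn a | R a b && (b < 60)] | a <- S]).
Fixpoint clo (R : nat -> nat -> bool) (k : nat) (S : seq nat) : seq nat :=
  match k with
  | 0 => S
  | k'.+1 => let S' := step R S in if size S' == size S then S else clo R k' S'
  end.
Lemma F1 : all (fun a => all (fun b => (b \in NDn a) == (a \in NDn b)) I60) I60.
Proof. vm_compute. reflexivity. Qed.
Lemma F2 : all (fun a => a \notin NDn a) I60.
Proof. vm_compute. reflexivity. Qed.
Lemma F3 : all (fun a => [seq b <- I60 | b \in NDn a] == NDn a) I60.
Proof. vm_compute. reflexivity. Qed.
Lemma F4 : all (fun a => size (NDn a) + (a == 0) + (a == 56) == 3) I60.
Proof. vm_compute. reflexivity. Qed.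
Lemma F6 : all (fun a => all (fun b => (b \in NDn a) ==> ((a \in Alist) != (b \in Alist))) I60) I60.
Proof. vm_compute. reflexivity. Qed.
Lemma F7 : let C := clo Rn 60 [:: 0] in all (fun x => x \in C) I60.
Proof. vm_compute. reflexivity. Qed.
Lemma F8 : all (fun z => let C0 := clo (Rm z) 60 [:: 0] in let C1 := clo (Rm z) 60 [:: 56] in all (fun x => [|| x == z, (z != 0) && (x \in C0) | (z != 56) && (x \in C1)]) I60) I60.
Proof. vm_compute. reflexivity. Qed.

Definition eR (R : nat -> nat -> bool) : rel 'I_60 := fun x y => R (val x) (val y).

Lemma clo_sound R k S t :
  (forall s, s \in S -> s < 60 /\ connect (eR R) (inord t) (inord s)) ->
  forall s, s \in clo R k S -> s < 60 /\ connect (eR R) (inord t) (inord s).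
Proof.
elim: k S => [|k IH] S HS //=.
set S' := step R S.
have HS' : forall s, s \in S' -> s < 60 /\ connect (eR R) (inord t) (inord s).
  move=> s; rewrite mem_undup mem_cat => /orP[/HS //|].
  case/flattenP => l /mapP[a aS ->]; rewrite mem_filter => /andP[/andP[Ras s60] _].
  have [a60 Ca] := HS a aS; split => //.
  apply: connect_trans Ca _; apply: connect1.
  by rewrite /eR /= !inordK.
by case: ifP => _ //; apply: IH.
Qed.

Lemma ib (b : bool) (x : nat) : (b -> x = 3) -> b ==> (x == 3).
Proof. by case: b => // /(_ isT) ->. Qed.
Lemma imp (a b : bool) : a ==> b -> a -> b. Proof. by move/implyP. Qed.
Arguments imp {a b}.
Definition Ball (P : bool -> bool) := P true && P false.
Lemma BallP P : Ball P -> forall b, P b. Proof. by case/andP=> ? ? []. Qed.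
Arguments BallP {P}.
Definition Qst (cu : bool) (du : nat) (cv : bool) (dv : nat) : bool :=
  [|| ~~ cu && cv && (dv == 2), cu && ~~ cv && (du == 2) | [&& cu, cv, du == 1 & dv == 1]].
Definition Qbool (cu cv b04 b06 b14 b15 b17 b25 b26 b27 b35 b36 b37 : bool) : bool :=
  ((cu + b04 + b06 == 1) || (cu + b04 + b06 == 2)) ==> ((b14 + b15 + b17 == 1) || (b14 + b15 + b17 == 2)) ==> ((b25 + b26 + b27 == 1) || (b25 + b26 + b27 == 2)) ==> ((b35 + b36 + b37 == 1) || (b35 + b36 + b37 == 2)) ==> ((cv + b04 + b14 == 1) || (cv + b04 + b14 == 2)) ==> ((b15 + b25 + b35 == 1) || (b15 + b25 + b35 == 2)) ==> ((b06 + b26 + b36 == 1) || (b06 + b26 + b36 == 2)) ==> ((b17 + b27 + b37 == 1) || (b17 + b27 + b37 == 2)) ==> (b04 ==> ((cu + b04 + b06) + (cv + b04 + b14) == 3)) ==> (b06 ==> ((cu + b04 + b06) + (b06 + b26 + b36) == 3)) ==> (b14 ==> ((b14 + b15 + b17) + (cv + b04 + b14) == 3)) ==> (b15 ==> ((b14 + b15 + b17) + (b15 + b25 + b35) == 3)) ==> (b17 ==> ((b14 + b15 + b17) + (b17 + b27 + b37) == 3)) ==> (b25 ==> ((b25 + b26 + b27) + (b15 + b25 + b35) == 3)) ==> (b26 ==> ((b25 + b26 + b27) + (b06 + b26 + b36) == 3)) ==> (b27 ==> ((b25 + b26 + b27) + (b17 + b27 + b37) == 3)) ==> (b35 ==>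 ((b35 + b36 + b37) + (b15 + b25 + b35) == 3)) ==> (b36 ==> ((b35 + b36 + b37) + (b06 + b26 + b36) == 3)) ==> (b37 ==> ((b35 + b36 + b37) + (b17 + b27 + b37) == 3)) ==> (Qst cu (cu + b04 + b06) cv (cv + b04 + b14)).
Lemma Qall_b : Ball (fun cu => Ball (fun cv => Ball (fun b04 => Ball (fun b06 => Ball (fun b14 => Ball (fun b15 => Ball (fun b17 => Ball (fun b25 => Ball (fun b26 => Ball (fun b27 => Ball (fun b35 => Ball (fun b36 => Ball (fun b37 => Qbool cu cv b04 b06 b14 b15 b17 b25 b26 b27 b35 b36 b37))))))))))))).
Proof. vm_compute. reflexivity. Qed.
Lemma Qall cu cv b04 b06 b14 b15 b17 b25 b26 b27 b35 b36 b37 : Qbool cu cv b04 b06 b14 b15 b17 b25 b26 b27 b35 b36 b37.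
Proof. exact: (BallP (BallP (BallP (BallP (BallP (BallP (BallP (BallP (BallP (BallP (BallP (BallP (BallP (Qall_b) cu) cv) b04) b06) b14) b15) b17) b25) b26) b27) b35) b36) b37). Qed.
Lemma Qcore (cu cv b04 b06 b14 b15 b17 b25 b26 b27 b35 b36 b37 : bool) (d0 d1 d2 d3 d4 d5 d6 d7 : nat) :
  d0 = cu + b04 + b06 ->
  d1 = b14 + b15 + b17 ->
  d2 = b25 + b26 + b27 ->
  d3 = b35 + b36 + b37 ->
  d4 = cv + b04 + b14 ->
  d5 = b15 + b25 + b35 ->
  d6 = b06 + b26 + b36 ->
  d7 = b17 + b27 + b37 ->
  (d0 == 1) || (d0 == 2) ->
  (d1 == 1) || (d1 == 2) ->
  (d2 == 1) || (d2 == 2) ->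
  (d3 == 1) || (d3 == 2) ->
  (d4 == 1) || (d4 == 2) ->
  (d5 == 1) || (d5 == 2) ->
  (d6 == 1) || (d6 == 2) ->
  (d7 == 1) || (d7 == 2) ->
  (b04 -> d0 + d4 = 3) ->
  (b06 -> d0 + d6 = 3) ->
  (b14 -> d1 + d4 = 3) ->
  (b15 -> d1 + d5 = 3) ->
  (b17 -> d1 + d7 = 3) ->
  (b25 -> d2 + d5 = 3) ->
  (b26 -> d2 + d6 = 3) ->
  (b27 -> d2 + d7 = 3) ->
  (b35 -> d3 + d5 = 3) ->
  (b36 -> d3 + d6 = 3) ->
  (b37 -> d3 + d7 = 3) ->
  Qst cu d0 cv d4.
Proof.
move=> e0 e1 e2 e3 e4 e5 e6 e7 h0 h1 h2 h3 h4 h5 h6 h7 /ib f0 /ib f1 /ib f2 /ib f3 /ib f4 /ib f5 /ib f6 /ib f7 /ib f8 /ib f9 /ib f10.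
subst.
exact: (imp (imp (imp (imp (imp (imp (imp (imp (imp (imp (imp (imp (imp (imp (imp (imp (imp (imp (imp (Qall cu cv b04 b06 b14 b15 b17 b25 b26 b27 b35 b36 b37) h0) h1) h2) h3) h4) h5) h6) h7) f0) f1) f2) f3) f4) f5) f6) f7) f8) f9) f10).
Qed.

Lemma Xcore (eu ev b1 b2 c1 c2 : bool) (du dv D1u D1v D2u D2v : nat) :
 du = eu + b1 + b2 -> dv = ev + c1 + c2 ->
 (du == 1) || (du == 2) -> (dv == 1) || (dv == 2) ->
 (b1 -> du + D1v = 3) -> (b2 -> du + D2v = 3) -> (c1 -> dv + D1u = 3) -> (c2 -> dv + D2u = 3) ->
 Qst c1 D1u b1 D1v -> Qst c2 D2u b2 D2v -> ~~ eu && ~~ ev.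
Proof.
move=> -> ->; rewrite /Qst.
case: eu ev b1 b2 c1 c2 => [] [] [] [] [] [] //= h1 h2 g1 g2 g3 g4 q1 q2;
  repeat match goal with H : is_true true -> _ |- _ => specialize (H isT) end; lia.
Qed.

Lemma local (g : nat -> nat -> bool) (dg : nat -> nat) :
  (forall a, 8 <= a < 52 -> [/\ dg a = count (fun b => g (Nat.min a b) (Nat.max a b)) (NDn a), (dg a == 1) || (dg a == 2) & forall b, b \in NDn a -> g (Nat.min a b) (Nat.max a b) -> dg a + dg b = 3]) -> False.
Proof.
move=> H.
have [e8 h8 f8] := H 8 isT; simpl in e8.
have [e9 h9 f9] := H 9 isT; simpl in e9.
have [e10 h10 f10] := H 10 isT; simpl in e10.
have [e11 h11 f11] := H 11 isT; simpl in e11.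
have [e12 h12 f12] := H 12 isT; simpl in e12.
have [e13 h13 f13] := H 13 isT; simpl in e13.
have [e14 h14 f14] := H 14 isT; simpl in e14.
have [e15 h15 f15] := H 15 isT; simpl in e15.
have [e16 h16 f16] := H 16 isT; simpl in e16.
have [e17 h17 f17] := H 17 isT; simpl in e17.
have [e18 h18 f18] := H 18 isT; simpl in e18.
have [e19 h19 f19] := H 19 isT; simpl in e19.
have [e20 h20 f20] := H 20 isT; simpl in e20.
have [e21 h21 f21] := H 21 isT; simpl in e21.
have [e22 h22 f22] := H 22 isT; simpl in e22.
have [e23 h23 f23] := H 23 isT; simpl in e23.
have [e24 h24 f24] := H 24 isT; simpl in e24.
have [e25 h25 f25] := H 25 isT; simpl in e25.
have [e26 h26 f26] := H 26 isT; simpl in e26.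
have [e27 h27 f27] := H 27 isT; simpl in e27.
have [e28 h28 f28] := H 28 isT; simpl in e28.
have [e29 h29 f29] := H 29 isT; simpl in e29.
have [e30 h30 f30] := H 30 isT; simpl in e30.
have [e31 h31 f31] := H 31 isT; simpl in e31.
have [e32 h32 f32] := H 32 isT; simpl in e32.
have [e33 h33 f33] := H 33 isT; simpl in e33.
have [e34 h34 f34] := H 34 isT; simpl in e34.
have [e35 h35 f35] := H 35 isT; simpl in e35.
have [e36 h36 f36] := H 36 isT; simpl in e36.
have [e37 h37 f37] := H 37 isT; simpl in e37.
have [e38 h38 f38] := H 38 isT; simpl in e38.
have [e39 h39 f39] := H 39 isT; simpl in e39.
have [e40 h40 f40] := H 40 isT; simpl in e40.
have [e41 h41 f41] := H 41 isT; simpl in e41.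
have [e42 h42 f42] := H 42 isT; simpl in e42.
have [e43 h43 f43] := H 43 isT; simpl in e43.
have [e44 h44 f44] := H 44 isT; simpl in e44.
have [e45 h45 f45] := H 45 isT; simpl in e45.
have [e46 h46 f46] := H 46 isT; simpl in e46.
have [e47 h47 f47] := H 47 isT; simpl in e47.
have [e48 h48 f48] := H 48 isT; simpl in e48.
have [e49 h49 f49] := H 49 isT; simpl in e49.
have [e50 h50 f50] := H 50 isT; simpl in e50.
have [e51 h51 f51] := H 51 isT; simpl in e51.
have E10 : dg 10 = (g 9 10 : nat) + (g 10 14 : nat) + (g 10 16 : nat) by clear -e10; lia.
have E11 : dg 11 = (g 11 14 : nat) + (g 11 15 : nat) + (g 11 17 : nat) by clear -e11; lia.
have E12 : dg 12 = (g 12 15 : nat) + (g 12 16 : nat) + (g 12 17 : nat) by clear -e12; lia.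
have E13 : dg 13 = (g 13 15 : nat) + (g 13 16 : nat) + (g 13 17 : nat) by clear -e13; lia.
have E14 : dg 14 = (g 8 14 : nat) + (g 10 14 : nat) + (g 11 14 : nat) by clear -e14; lia.
have E15 : dg 15 = (g 11 15 : nat) + (g 12 15 : nat) + (g 13 15 : nat) by clear -e15; lia.
have E16 : dg 16 = (g 10 16 : nat) + (g 12 16 : nat) + (g 13 16 : nat) by clear -e16; lia.
have E17 : dg 17 = (g 11 17 : nat) + (g 12 17 : nat) + (g 13 17 : nat) by clear -e17; lia.
have Q10 := Qcore (g 9 10) (g 8 14) (g 10 14) (g 10 16) (g 11 14) (g 11 15) (g 11 17) (g 12 15) (g 12 16) (g 12 17) (g 13 15) (g 13 16) (g 13 17) (dg 10) (dg 11) (dg 12) (dg 13) (dg 14) (dg 15) (dg 16) (dg 17) E10 E11 E12 E13 E14 E15 E16 E17 h10 h11 h12 h13 h14 h15 h16 h17 (f10 14 isT) (f10 16 isT) (f11 14 isT) (f11 15 isT) (f11 17 isT) (f12 15 isT) (f12 16 isT) (f12 17 isT) (f13 15 isT) (f13 16 isT) (f13 17 isT).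
have E18 : dg 18 = (g 9 18 : nat) + (g 18 22 : nat) + (g 18 24 : nat) by clear -e18; lia.
have E19 : dg 19 = (g 19 22 : nat) + (g 19 23 : nat) + (g 19 25 : nat) by clear -e19; lia.
have E20 : dg 20 = (g 20 23 : nat) + (g 20 24 : nat) + (g 20 25 : nat) by clear -e20; lia.
have E21 : dg 21 = (g 21 23 : nat) + (g 21 24 : nat) + (g 21 25 : nat) by clear -e21; lia.
have E22 : dg 22 = (g 8 22 : nat) + (g 18 22 : nat) + (g 19 22 : nat) by clear -e22; lia.
have E23 : dg 23 = (g 19 23 : nat) + (g 20 23 : nat) + (g 21 23 : nat) by clear -e23; lia.
have E24 : dg 24 = (g 18 24 : nat) + (g 20 24 : nat) + (g 21 24 : nat) by clear -e24; lia.
have E25 : dg 25 = (g 19 25 : nat) + (g 20 25 : nat) + (g 21 25 : nat) by clear -e25; lia.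
have Q18 := Qcore (g 9 18) (g 8 22) (g 18 22) (g 18 24) (g 19 22) (g 19 23) (g 19 25) (g 20 23) (g 20 24) (g 20 25) (g 21 23) (g 21 24) (g 21 25) (dg 18) (dg 19) (dg 20) (dg 21) (dg 22) (dg 23) (dg 24) (dg 25) E18 E19 E20 E21 E22 E23 E24 E25 h18 h19 h20 h21 h22 h23 h24 h25 (f18 22 isT) (f18 24 isT) (f19 22 isT) (f19 23 isT) (f19 25 isT) (f20 23 isT) (f20 24 isT) (f20 25 isT) (f21 23 isT) (f21 24 isT) (f21 25 isT).
have E26 : dg 26 = (g 9 26 : nat) + (g 26 30 : nat) + (g 26 32 : nat) by clear -e26; lia.
have E27 : dg 27 = (g 27 30 : nat) + (g 27 31 : nat) + (g 27 33 : nat) by clear -e27; lia.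
have E28 : dg 28 = (g 28 31 : nat) + (g 28 32 : nat) + (g 28 33 : nat) by clear -e28; lia.
have E29 : dg 29 = (g 29 31 : nat) + (g 29 32 : nat) + (g 29 33 : nat) by clear -e29; lia.
have E30 : dg 30 = (g 30 34 : nat) + (g 26 30 : nat) + (g 27 30 : nat) by clear -e30; lia.
have E31 : dg 31 = (g 27 31 : nat) + (g 28 31 : nat) + (g 29 31 : nat) by clear -e31; lia.
have E32 : dg 32 = (g 26 32 : nat) + (g 28 32 : nat) + (g 29 32 : nat) by clear -e32; lia.
have E33 : dg 33 = (g 27 33 : nat) + (g 28 33 : nat) + (g 29 33 : nat) by clear -e33; lia.
have Q26 := Qcore (g 9 26) (g 30 34) (g 26 30) (g 26 32) (g 27 30) (g 27 31) (g 27 33) (g 28 31) (g 28 32) (g 28 33) (g 29 31) (g 29 32) (g 29 33) (dg 26) (dg 27) (dg 28) (dg 29) (dg 30) (dg 31) (dg 32) (dg 33) E26 E27 E28 E29 E30 E31 E32 E33 h26 h27 h28 h29 h30 h31 h32 h33 (f26 30 isT) (f26 32 isT) (f27 30 isT) (f27 31 isT) (f27 33 isT) (f28 31 isT) (f28 32 isT) (f28 33 isT) (f29 31 isT) (f29 32 isT) (f29 33 isT).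
have E36 : dg 36 = (g 35 36 : nat) + (g 36 40 : nat) + (g 36 42 : nat) by clear -e36; lia.
have E37 : dg 37 = (g 37 40 : nat) + (g 37 41 : nat) + (g 37 43 : nat) by clear -e37; lia.
have E38 : dg 38 = (g 38 41 : nat) + (g 38 42 : nat) + (g 38 43 : nat) by clear -e38; lia.
have E39 : dg 39 = (g 39 41 : nat) + (g 39 42 : nat) + (g 39 43 : nat) by clear -e39; lia.
have E40 : dg 40 = (g 34 40 : nat) + (g 36 40 : nat) + (g 37 40 : nat) by clear -e40; lia.
have E41 : dg 41 = (g 37 41 : nat) + (g 38 41 : nat) + (g 39 41 : nat) by clear -e41; lia.
have E42 : dg 42 = (g 36 42 : nat) + (g 38 42 : nat) + (g 39 42 : nat) by clear -e42; lia.
have E43 : dg 43 = (g 37 43 : nat) + (g 38 43 : nat) + (g 39 43 : nat) by clear -e43; lia.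
have Q36 := Qcore (g 35 36) (g 34 40) (g 36 40) (g 36 42) (g 37 40) (g 37 41) (g 37 43) (g 38 41) (g 38 42) (g 38 43) (g 39 41) (g 39 42) (g 39 43) (dg 36) (dg 37) (dg 38) (dg 39) (dg 40) (dg 41) (dg 42) (dg 43) E36 E37 E38 E39 E40 E41 E42 E43 h36 h37 h38 h39 h40 h41 h42 h43 (f36 40 isT) (f36 42 isT) (f37 40 isT) (f37 41 isT) (f37 43 isT) (f38 41 isT) (f38 42 isT) (f38 43 isT) (f39 41 isT) (f39 42 isT) (f39 43 isT).
have E44 : dg 44 = (g 35 44 : nat) + (g 44 48 : nat) + (g 44 50 : nat) by clear -e44; lia.
have E45 : dg 45 = (g 45 48 : nat) + (g 45 49 : nat) + (g 45 51 : nat) by clear -e45; lia.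
have E46 : dg 46 = (g 46 49 : nat) + (g 46 50 : nat) + (g 46 51 : nat) by clear -e46; lia.
have E47 : dg 47 = (g 47 49 : nat) + (g 47 50 : nat) + (g 47 51 : nat) by clear -e47; lia.
have E48 : dg 48 = (g 34 48 : nat) + (g 44 48 : nat) + (g 45 48 : nat) by clear -e48; lia.
have E49 : dg 49 = (g 45 49 : nat) + (g 46 49 : nat) + (g 47 49 : nat) by clear -e49; lia.
have E50 : dg 50 = (g 44 50 : nat) + (g 46 50 : nat) + (g 47 50 : nat) by clear -e50; lia.
have E51 : dg 51 = (g 45 51 : nat) + (g 46 51 : nat) + (g 47 51 : nat) by clear -e51; lia.
have Q44 := Qcore (g 35 44) (g 34 48) (g 44 48) (g 44 50) (g 45 48) (g 45 49) (g 45 51) (g 46 49) (g 46 50) (g 46 51) (g 47 49) (g 47 50) (g 47 51) (dg 44) (dg 45) (dg 46) (dg 47) (dg 48) (dg 49) (dg 50) (dg 51) E44 E45 E46 E47 E48 E49 E50 E51 h44 h45 h46 h47 h48 h49 h50 h51 (f44 48 isT) (f44 50 isT) (f45 48 isT) (f45 49 isT) (f45 51 isT) (f46 49 isT) (f46 50 isT) (f46 51 isT) (f47 49 isT) (f47 50 isT) (f47 51 isT).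
have EX8 : dg 8 = (g 4 8 : nat) + (g 8 14 : nat) + (g 8 22 : nat) by clear -e8; lia.
have EX9 : dg 9 = (g 9 26 : nat) + (g 9 10 : nat) + (g 9 18 : nat) by clear -e9; lia.
have X1 := Xcore (g 4 8) (g 9 26) (g 8 14) (g 8 22) (g 9 10) (g 9 18) (dg 8) (dg 9) (dg 10) (dg 14) (dg 18) (dg 22) EX8 EX9 h8 h9 (f8 14 isT) (f8 22 isT) (f9 10 isT) (f9 18 isT) Q10 Q18.
have EX34 : dg 34 = (g 30 34 : nat) + (g 34 40 : nat) + (g 34 48 : nat) by clear -e34; lia.
have EX35 : dg 35 = (g 35 52 : nat) + (g 35 36 : nat) + (g 35 44 : nat) by clear -e35; lia.
have X2 := Xcore (g 30 34) (g 35 52) (g 34 40) (g 34 48) (g 35 36) (g 35 44) (dg 34) (dg 35) (dg 36) (dg 40) (dg 44) (dg 48) EX34 EX35 h34 h35 (f34 40 isT) (f34 48 isT) (f35 36 isT) (f35 44 isT) Q36 Q44.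
case/andP: X1 => _ /negbTE K1; case/andP: X2 => /negbTE K2 _.
by move: Q26; rewrite /Qst K1 K2.
Qed.


Definition eD : rel 'I_60 := fun x y => val y \in NDn (val x).
Definition uD : 'I_60 := @Ordinal 60 0 isT.
Definition vD : 'I_60 := @Ordinal 60 56 isT.
Definition NDl (x : 'I_60) : seq 'I_60 := [seq y <- enum 'I_60 | eD x y].
Definition eDm (z : 'I_60) : rel 'I_60 := fun a b => [&& eD a b, a != z & b != z].

Lemma inI60 (x : 'I_60) : val x \in I60.
Proof. by rewrite mem_iota /= ltn_ord. Qed.

Lemma eD_sym : symmetric eD.
Proof.
move=> x y; have /allP/(_ _ (inI60 y))/eqP := allP F1 _ (inI60 x).
by rewrite /eD.
Qed.

Lemma eD_irr : irreflexive eD.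
Proof. by move=> x; apply/negbTE; have := allP F2 _ (inI60 x). Qed.

Lemma NDl_val x : map val (NDl x) = NDn (val x).
Proof.
rewrite /NDl -[X in X = _](_ : [seq b <- map val (enum 'I_60) | b \in NDn x] = _).
  by rewrite val_enum_ord; apply/eqP; exact: (allP F3 _ (inI60 x)).
by rewrite filter_map.
Qed.

Lemma NDl_size x : size (NDl x) + (x == uD) + (x == vD) = 3.
Proof.
rewrite -(size_map val) NDl_val -!val_eqE /=.
by apply/eqP; exact: (allP F4 _ (inI60 x)).
Qed.

Lemma connect_map (T T' : finType) (e : rel T) (e' : rel T') (f : T -> T') :
  (forall a b, e a b -> e' (f a) (f b)) -> forall a b, connect e a b -> connect e' (f a) (f b).
Proof.
move=> H a b /connectP [p pth ->]; elim: p a pth => [|c p IH] a /=.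
  by move=> _; apply: connect0.
case/andP => eac /IH; apply: connect_trans; apply: connect1; exact: H.
Qed.

Lemma inord0 : inord 0 = uD.
Proof. by apply: val_inj; rewrite /= inordK. Qed.
Lemma inord56 : inord 56 = vD.
Proof. by apply: val_inj; rewrite /= inordK. Qed.

Lemma DC x y : connect eD x y.
Proof.
have H : forall x, connect eD uD x.
  move=> x'; have := allP F7 _ (inI60 x').
  case/(clo_sound Rn 60 [:: 0] 0).
    by move=> s; rewrite inE => /eqP ->; split => //; apply: connect0.
  by move=> _; rewrite inord_val inord0.
apply: (connect_trans _ (H y)).
by rewrite (sym_connect_sym eD_sym).
Qed.

Lemma eDm_sym z : symmetric (eDm z).
Proof. by move=> a b; rewrite /eDm eD_sym; case: (a != z); case: (b != z); rewrite ?andbF. Qed.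

Lemma DCm z x : x != z ->
  (z != uD /\ connect (eDm z) x uD) \/ (z != vD /\ connect (eDm z) x vD).
Proof.
move=> xz.
have eq : eR (Rm (val z)) =2 eDm z by move=> a b; rewrite /eR /Rm /eDm /eD !val_eqE.
have := allP F8 _ (inI60 z) => /allP /(_ _ (inI60 x)).
rewrite val_eqE (negbTE xz).
have C t s : t < 60 -> s \in clo (Rm (val z)) 60 [:: t] -> connect (eDm z) (inord t) (inord s).
  move=> t60 hs; have [_ c] : s < 60 /\ connect (eR (Rm (val z))) (inord t) (inord s).
    apply: (clo_sound _ _ _ _ _ s hs) => s'; rewrite inE => /eqP ->; split => //; exact: connect0.
  by rewrite -(eq_connect eq).
case/or3P => // /andP [hz hx]; [left|right]; split.
- by rewrite -val_eqE.
- have := C 0 _ isT hx; rewrite inord_val inord0.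
  by rewrite (sym_connect_sym (eDm_sym z)).
- by rewrite -val_eqE.
- have := C 56 _ isT hx; rewrite inord_val inord56.
  by rewrite (sym_connect_sym (eDm_sym z)).
Qed.


Definition VT (k : nat) : finType := Finite.clone ('I_k.+1 * 'I_60)%type _.

Lemma cardVT k : #|VT k| = k.+1 * 60.
Proof. by rewrite card_prod !card_ord. Qed.

Definition Ek (k : nat) : rel (VT k) := fun p q =>
  [|| (p.1 == q.1) && eD p.2 q.2,
      [&& p.2 == vD, q.2 == uD & q.1 == ordS p.1] |
      [&& p.2 == uD, q.2 == vD & p.1 == ordS q.1]].

Section Fam.
Variable k : nat.
Local Notation T := (VT k).
Local Notation E := (@Ek k).

Lemma Ek_sym : symmetric E.
Proof.
move=> [i x] [j y]; rewrite /Ek /= (eq_sym i j) eD_sym.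
congr (_ || _); rewrite orbC; congr (_ || _); by rewrite andbCA.
Qed.

Lemma Ek_irr : irreflexive E.
Proof.
move=> [i x]; rewrite /Ek /= eD_irr andbF /=.
by case: (x =P vD) => [->|] //=; case: (x =P uD) => [->|].
Qed.

Definition nl (p : T) : seq T :=
  [seq (p.1, y) | y <- NDl p.2] ++ (if p.2 == vD then [:: (ordS p.1, uD)] else [::])
    ++ (if p.2 == uD then [:: (ord_pred p.1, vD)] else [::]).

Lemma mem_NDl x y : (y \in NDl x) = eD x y.
Proof. by rewrite mem_filter mem_enum andbT. Qed.

Lemma nlP p q : (q \in nl p) = E p q.
Proof.
case: p q => [i x] [j y]; rewrite /nl /Ek /= !mem_cat.
have -> : ((j, y) \in [seq (i, y0) | y0 <- NDl x]) = (i == j) && eD x y.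
  apply/mapP/andP => [[y' hy' [e1 e2]]|[/eqP-> h]].
    by subst; rewrite eqxx -mem_NDl.
  by exists y => //; rewrite mem_NDl.
congr (_ || (_ || _)).
  by case: (x == vD); rewrite ?inE ?xpair_eqE ?andbF // andbC.
case: (x == uD); rewrite ?inE ?xpair_eqE ?andbF //=.
by rewrite -(can2_eq (@ordSK _) (@ord_predK _)) (eq_sym (ordS j)) andbC.
Qed.

Lemma nl_uniq p : uniq (nl p).
Proof.
case: p => [i x]; rewrite /nl /= !cat_uniq.
rewrite map_inj_uniq; last by move=> a b [].
rewrite filter_uniq ?enum_uniq //=.
have [hv|hv] := boolP (x == vD); have [hu|hu] := boolP (x == uD); rewrite /= ?andbT ?orbF.
- by move: hv; rewrite (eqP hu).
- apply/mapP => [[y h [_ e]]]; by move: h; rewrite mem_NDl (eqP hv) -e.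
- apply/mapP => [[y h [_ e]]]; by move: h; rewrite mem_NDl (eqP hu) -e.
- done.
Qed.

Lemma Ek_cubic : cubic E.
Proof.
move=> p; rewrite /nbhd.
have -> : #|[set q | E p q]| = #|nl p|.
  by apply: eq_card => q; rewrite inE nlP.
move/card_uniqP: (nl_uniq p) ->.
case: p => [i x]; rewrite /nl /= !size_cat size_map.
by move: (NDl_size x); case: (x == uD); case: (x == vD) => /=; lia.
Qed.

Lemma Ek_bip : bipartite E.
Proof.
exists [set p : T | val p.2 \in Alist] => [[i x] [j y]]; rewrite /Ek /= !in_set.
case/or3P => [/andP [_ h]|/and3P [/eqP-> /eqP-> _]|/and3P [/eqP-> /eqP-> _]] //.
have := allP F6 _ (inI60 x) => /allP /(_ _ (inI60 y)).
by move/implyP; apply.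
Qed.

End Fam.


Lemma ring_conn m (Rl : 'I_m.+1 -> 'I_m.+1 -> Prop) (b : 'I_m.+1) :
  (forall x y z, Rl x y -> Rl y z -> Rl x z) -> (forall x y, Rl x y -> Rl y x) ->
  (forall x, Rl x x) ->
  (forall i, i != b -> Rl i (ordS i)) -> forall i, Rl i ord0.
Proof.
move=> Rt Rs Rr H.
have A : forall n, n <= b -> Rl (inord n) ord0.
  elim=> [|n IH] hn.
    by rewrite (_ : inord 0 = ord0) //; apply: val_inj; rewrite /= inordK.
  have hb := ltn_ord b.
  have e1 : ordS (inord n) = inord n.+1 :> 'I_m.+1.
    apply: val_inj; rewrite /= !inordK ?modn_small //; lia.
  have nb : inord n != b.
    apply/eqP => e; have := hn; rewrite -e inordK; lia.
  have := H _ nb; rewrite e1 => h.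
  apply: Rt (Rs _ _ h) (IH _); lia.
have B : forall d, b < m - d -> Rl (inord (m - d)) ord0.
  elim=> [|d IH] hd.
    have nb : inord (m - 0) != b.
      apply/eqP => e; have := hd; rewrite -e inordK; lia.
    have := H _ nb.
    rewrite (_ : ordS (inord (m - 0)) = ord0) //.
    apply: val_inj; rewrite /= inordK ?subn0 ?modnn //.
  have nb : inord (m - d.+1) != b.
    apply/eqP => e; have := hd; rewrite -e inordK; lia.
  have e1 : ordS (inord (m - d.+1)) = inord (m - d) :> 'I_m.+1.
    apply: val_inj; rewrite /= !inordK ?modn_small //; lia.
  have := H _ nb; rewrite e1 => h.
  apply: Rt h (IH _); lia.
move=> i; case: (leqP i b) => hib.
  by have := A i hib; rewrite inord_val.
have hi := ltn_ord i.
have hm : i <= m by rewrite -ltnS.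
by have := B (m - i); rewrite subKn // inord_val; apply.
Qed.

Lemma ctr (T : finType) (e : rel T) x y z : connect e x y -> connect e y z -> connect e x z.
Proof. exact: connect_trans. Qed.
Arguments ctr {T e x y z}.

Section Conn.
Variable k : nat.
Local Notation T := (VT k).
Local Notation E := (@Ek k).

Lemma conn_minus (w : T) : connected_minus E w.
Proof.
case: w => j z p q hp hq.
set G := [rel a b | E a b && (a != (j, z)) && (b != (j, z))].
have Gsym : symmetric G.
  by move=> a b; rewrite /G /= Ek_sym; case: (a != _); case: (b != _); rewrite ?andbF.
have CS := sym_connect_sym Gsym.
have lift i (R : rel 'I_60) : (forall a b, R a b -> G (i, a) (i, b)) ->
    forall a b, connect R a b -> connect G (i, a) (i, b).
  by move=> HR; apply: (@connect_map _ _ R G (fun a => (i, a))).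
have liftO i a b : i != j -> connect G (i, a) (i, b).
  move=> ij; apply: (lift i eD) => [a' b' h|]; last exact: DC.
  by rewrite /G /= /Ek /= eqxx h /= !xpair_eqE (negbTE ij).
have link i : (i, vD) != (j, z) -> (ordS i, uD) != (j, z) -> G (i, vD) (ordS i, uD).
  by move=> h1 h2; rewrite /G /= h1 h2 /Ek /= !eqxx /= orbT.
pose r i := if (i == j) && (z == uD) then (i, vD) else (i, uD).
pose b := if z == uD then ord_pred j else j.
have Hring : forall i, connect G (r i) (r ord0).
  apply: (@ring_conn k (fun x y => connect G (r x) (r y)) b).
  - by move=> x y t; apply: connect_trans.
  - by move=> x y; rewrite CS.
  - by move=> x; apply: connect0.
  move=> i ib.
  have h1 : (i, vD) != (j, z).
    rewrite xpair_eqE; apply/negP => /andP [/eqP e1 /eqP e2]; move: ib.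
    by rewrite /b -e2 (_ : (vD == uD) = false) // e1 eqxx.
  have h2 : (ordS i, uD) != (j, z).
    rewrite xpair_eqE; apply/negP => /andP [/eqP e1 /eqP e2]; move: ib.
    by rewrite /b -e2 eqxx -e1 ordSK eqxx.
  have rS : r (ordS i) = (ordS i, uD).
    rewrite /r; case: (ordS i =P j) => [e|] //=.
    case: (z =P uD) => [e2|] //; move: ib; by rewrite /b e2 eqxx -e ordSK eqxx.
  have c1 : connect G (r i) (i, vD).
    rewrite /r; case: (i =P j) => [e|ne] /=.
      case: (z =P uD) => [_|nu]; first exact: connect0.
      move: ib; rewrite /b; case: (z =P uD) => // _; by rewrite e eqxx.
    by apply: liftO; apply/eqP.
  have c2 : connect G (i, vD) (ordS i, uD) by apply: connect1; apply: link.
  rewrite rS; exact: (connect_trans c1 c2).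
have toR : forall p, p != (j, z) -> connect G p (r ord0).
  move=> [i x] hx.
  case: (i =P j) => [e|ne]; last first.
    suff Hc : connect G (i, x) (r i) by exact: ctr Hc (Hring i).
    by rewrite /r (_ : (i == j) = false); [apply: liftO; apply/eqP | apply/eqP].
  subst i.
  have xz : x != z by apply: contraNneq hx => ->.
  case: (DCm z x xz) => [[zu c]|[zv c]].
    suff Hc : connect G (j, x) (r j) by exact: ctr Hc (Hring j).
    rewrite /r (negbTE zu) andbF; apply: (lift j (eDm z)) c => a b' /and3P [h ha hb].
    by rewrite /G /= /Ek /= eqxx h /= !xpair_eqE eqxx /= ha hb.
  have cv : connect G (j, x) (j, vD).
    apply: (lift j (eDm z)) c => a b' /and3P [h ha hb].
    by rewrite /G /= /Ek /= eqxx h /= !xpair_eqE eqxx /= ha hb.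
  case: (z =P uD) => [zu|nu].
    by have := Hring j; rewrite /r zu !eqxx /= => Hj; exact: ctr cv Hj.
  have rS : r (ordS j) = (ordS j, uD) by rewrite /r (_ : (z == uD) = false) ?andbF //; apply/eqP.
  have l1 : (j, vD) != (j, z) by rewrite xpair_eqE eqxx eq_sym.
  have l2 : (ordS j, uD) != (j, z).
    by rewrite xpair_eqE negb_and [uD == z]eq_sym (_ : (z == uD) = false) ?orbT //; apply/eqP.
  have c2 : connect G (j, vD) (ordS j, uD) by apply: connect1; exact: link.
  have := Hring (ordS j); rewrite rS => Hj.
  exact: ctr cv (ctr c2 Hj).
have hs := toR p hp; have ht := toR q hq.
by apply: (ctr hs); rewrite CS.
Qed.
End Conn.


Definition fdeg (T : finType) (F : rel T) (p : T) := #|[set q | F p q]|.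
Arguments fdeg {T}.

Lemma LF_deg (T : finType) (e F : rel T) : irreflexive e -> Lambda_factor e F ->
  (forall p, (fdeg F p == 1) || (fdeg F p == 2)) /\
  (forall p q, F p q -> fdeg F p + fdeg F q = 3).
Proof.
move=> eirr [Fsym Fsub Fc].
have Firr x : F x x = false.
  by apply/negbTE/negP => /Fsub; rewrite eirr.
have key : forall p, exists bb : T, forall x, x \in component F p ->
    fdeg F x = (if x == bb then 2 else 1) /\
    (forall y, F x y -> (y \in component F p) /\ ((x == bb) != (y == bb))).
  move=> p; have [a [b [c [u CE Fab Fbc nFac]]]] := Fc p.
  have inC x y : x \in component F p -> F x y -> y \in component F p.
    by rewrite !inE => h /connect1; apply: connect_trans.
  have ab : a != b by apply/eqP => eq0; move: u; rewrite eq0 /= inE eqxx.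
  have ac : a != c by apply/eqP => eq0; move: u; rewrite eq0 /= !inE eqxx orbT.
  have bc : b != c by apply/eqP => eq0; move: u; rewrite eq0 /= !inE eqxx /= andbF.
  have memC x : (x \in component F p) = [|| x == a, x == b | x == c].
    by rewrite CE !inE orbA.
  have nFca : F c a = false by rewrite Fsym; apply/negbTE.
  have Fba : F b a by rewrite Fsym.
  have Fcb : F c b by rewrite Fsym.
  have nbrs x y : x \in component F p -> F x y ->
      [|| (x == a) && (y == b), (x == b) && ((y == a) || (y == c)) | (x == c) && (y == b)].
    move=> hx hxy; have hy := inC _ _ hx hxy; move: hx hy hxy; rewrite !memC.
    by case/or3P => /eqP -> /or3P [] /eqP ->; rewrite ?Firr ?(negbTE nFac) ?nFca ?eqxx ?orbT.
  exists b => x hx; split; last first.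
    move=> y hxy; split; first exact: inC hxy.
    case/or3P: (nbrs x y hx hxy) => [/andP [/eqP -> /eqP ->]|/andP [/eqP -> /orP [] /eqP ->]|/andP [/eqP -> /eqP ->]];
      by rewrite ?eqxx ?(negbTE ab) ?(negbTE bc) ?(eq_sym a b) ?(negbTE ab) ?(eq_sym c b) ?(negbTE bc).
  have degE : [set q | F x q] = if x == b then [set a; c] else [set b].
    apply/setP => y; rewrite !inE.
    apply/idP/idP => [hxy|].
      case/or3P: (nbrs x y hx hxy) => [/andP [/eqP -> /eqP ->]|/andP [/eqP -> /orP [] /eqP ->]|/andP [/eqP -> /eqP ->]];
        by rewrite ?eqxx ?(negbTE ab) ?(eq_sym c b) ?(negbTE bc) ?(eq_sym a b) ?inE ?eqxx ?orbT.
    move: hx; rewrite memC; case/or3P => /eqP ->; rewrite ?eqxx ?(negbTE ab) ?(eq_sym c b) ?(negbTE bc) ?inE.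
    - by move/eqP ->.
    - by case/orP => /eqP ->.
    - by move/eqP ->.
  rewrite /fdeg degE; case: (x == b); first by rewrite cards2 ac.
  by rewrite cards1.
have pin p : p \in component F p by rewrite inE connect0.
split.
  move=> p; have [bb H] := key p; have [-> _] := H p (pin p).
  by case: (p == bb).
move=> p q hpq; have [bb H] := key p; have [dp H2] := H p (pin p).
have [hq neq] := H2 q hpq; have [dq _] := H q hq.
by rewrite dp dq; move: neq; case: (p == bb); case: (q == bb).
Qed.

Lemma minl a b : a <= b -> Nat.min a b = a. Proof. move/leP; exact: PeanoNat.Nat.min_l. Qed.
Lemma maxr a b : a <= b -> Nat.max a b = b. Proof. move/leP; exact: PeanoNat.Nat.max_r. Qed.
Lemma minr a b : b <= a -> Nat.min a b = b. Proof. move/leP; exact: PeanoNat.Nat.min_r. Qed.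
Lemma maxl a b : b <= a -> Nat.max a b = a. Proof. move/leP; exact: PeanoNat.Nat.max_l. Qed.

Arguments minl {a b}. Arguments maxr {a b}. Arguments minr {a b}. Arguments maxl {a b}.

Section Fin.
Variable k : nat.
Local Notation T := (VT k).
Local Notation E := (@Ek k).

Lemma Ek_conn : connected E.
Proof.
pose w1 : T := (ord0, uD); pose w2 : T := (ord0, vD).
pose w3 : T := (ord0, @Ordinal 60 1 isT).
have sub w x y : connect [rel a b | E a b && (a != w) && (b != w)] x y -> connect E x y.
  apply: (@connect_map _ _ _ _ id) => a b /= /andP [/andP [h _] _]; exact: h.
have hub x : connect E x w1.
  case: (x =P w1) => [->|n1]; first exact: connect0.
  case: (x =P w2) => [->|n2].
    by apply: (sub w3); apply: conn_minus; rewrite /w1 /w2 /w3 xpair_eqE.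
  by apply: (sub w2); apply: conn_minus; [apply/eqP | rewrite /w1 /w2 xpair_eqE].
move=> x y; apply: (ctr (hub x)); rewrite (sym_connect_sym (@Ek_sym k)); exact: hub.
Qed.

Lemma noLF F : Lambda_factor E F -> False.
Proof.
move=> LF; have [Fsym Fsub _] := LF.
have [D12 Dsum] := LF_deg _ _ _ (@Ek_irr k) LF.
pose i0 : 'I_k.+1 := ord0.
pose g a b := F (i0, inord a) (i0, inord b).
pose dg a := fdeg F ((i0, inord a) : T).
apply: (local g dg) => a /andP [a8 a52].
have a60 : a < 60 by lia.
pose x : 'I_60 := inord a.
have xa : val x = a by exact: inordK.
have xu : (x == uD) = false by apply/negbTE; rewrite -val_eqE xa /=; lia.
have xv : (x == vD) = false by apply/negbTE; rewrite -val_eqE xa /=; lia.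
have nlp : nl k ((i0, x) : T) = [seq (i0, y) | y <- NDl x] by rewrite /nl xu xv !cats0.
have degp : dg a = count (F (i0, x)) (nl k ((i0, x) : T)).
  rewrite /dg /fdeg -size_filter.
  have/card_uniqP <- := filter_uniq (F (i0, x)) (nl_uniq k ((i0, x) : T)).
  apply: eq_card => q; rewrite inE mem_filter; apply/idP/andP => [h|[]//]; split => //.
  by rewrite (nlP k); exact: Fsub.
have Fg b : F (i0, x) (i0, inord b) = g (Nat.min a b) (Nat.max a b).
  rewrite /g; case: (leqP a b) => h.
    by rewrite (minl h) (maxr h).
  have hb : b <= a := ltnW h.
  by rewrite (minr hb) (maxl hb) Fsym.
split.
- rewrite degp nlp count_map.
  have -> : count (fun b => g (Nat.min a b) (Nat.max a b)) (NDn a)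
          = count (fun b => F (i0, x) (i0, inord b)) (NDn a).
    by apply: eq_count => b; rewrite Fg.
  rewrite -xa -NDl_val count_map; apply: eq_count => y /=; by rewrite inord_val.
- exact: D12.
- by move=> b _; rewrite -Fg => /Dsum.
Qed.
End Fin.

Theorem mainTheorem2 :
  exists (V : nat -> finType) (E : forall k, rel (V k)),
    (forall k,
       [/\ simple_graph (E k), two_connected (E k), cubic (E k),
           bipartite (E k) & #|V k| %% 6 = 0] /\
       ~ has_Lambda_factor (E k)) /\
    (forall k l, k <> l -> ~ isomorphic (E k) (E l)).
Proof.
exists VT, Ek; split.
  move=> k; split; last by move=> [F LF]; exact: noLF LF.
  split.
  - split; [exact: Ek_sym | exact: Ek_irr].
  - split; first by rewrite cardVT; lia.
    split; [exact: Ek_conn | exact: conn_minus].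
  - exact: Ek_cubic.
  - exact: Ek_bip.
  - by rewrite cardVT (_ : 60 = 10 * 6) // mulnA modnMl.
move=> k l kl [f [fb _]]; apply: kl; have := bij_eq_card fb; rewrite !cardVT; lia.
Qed.
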